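(* Let $N\ge 0$ and let $\mathcal P\subseteq \Pi=\mathbb C[x_1,\dots,x_s]$ be a degree reducing universal interpolation space of order $N+1$ which is non-redundant, i.e. no proper subspace $\mathcal Q\subsetneq\mathcal P$ is also a degree reducing universal interpolation space of order $N+1$. Then $\mathcal P\subseteq \Pi_N$.
   Context: $\Pi=\mathbb C[x_1,\dots,x_s]$; $\deg p$ denotes total degree, with the convention $\deg 0<0$; $\Pi_N$ is the space of polynomials of total degree at most $N$. A linear subspace $\mathcal P\subseteq\Pi$ is a degree reducing universal interpolation space of order $M$ if for every finite set $X\subset\mathbb C^s$ with $\#X\le M$ and every $q\in\Pi$ there exists $p\in\mathcal P$ with $p(x)=q(x)$ for all $x\in X$ and $\deg p\le\deg q$. *)

(* Defs.v *)
From HB Require Import structures.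
From mathcomp Require Import all_boot all_order all_algebra.
From mathcomp Require Import reals complex mpoly.
Set Implicit Arguments. Unset Strict Implicit. Unset Printing Implicit Defensive.
Import Order.TTheory GRing.Theory Num.Theory.
Local Open Scope ring_scope.

Section Defs.
Variables (R : realType) (s : nat).
Local Notation C := (R[i]).
Local Notation Pi := {mpoly C[s]}.

(* Total degree comparison: msize p = deg p + 1 for p <> 0, msize 0 = 0
   (consistent with the convention deg 0 < 0).
   deg p <= deg q  <->  msize p <= msize q. *)

Definition lin_subspace (P : Pi -> Prop) : Prop :=
  P 0 /\ forall (a : C) (p q : Pi), P p -> P q -> P (a *: p + q).

Definition evalpt (p : Pi) (x : 'rV[C]_s) : C := p.@[fun i => x 0 i].

(* Degree reducing universal interpolation space of order M:
   for every finite set X of at most M points (given as a list; repetitions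
   do not matter) and every q, some p in P interpolates q on X with
   deg p <= deg q. *)
Definition dr_univ_interp (M : nat) (P : Pi -> Prop) : Prop :=
  lin_subspace P /\
  forall (X : seq 'rV[C]_s) (q : Pi), (size X <= M)%N ->
    exists p : Pi, [/\ P p, (forall x, x \in X -> evalpt p x = evalpt q x)
                      & (msize p <= msize q)%N].

Definition nonredundant_druis (M : nat) (P : Pi -> Prop) : Prop :=
  dr_univ_interp M P /\
  ~ exists Q : Pi -> Prop,
      [/\ lin_subspace Q, (forall p, Q p -> P p), (exists p, P p /\ ~ Q p)
        & dr_univ_interp M Q].
End Defs.

(* Main.v *)
Require Import Defs.
From Stdlib Require Import Lia.
From mathcomp Require Import zify.
From HB Require Import structures.
From mathcomp Require Import all_boot all_order all_algebra.
From mathcomp Require Import reals complex mpoly.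
Import Order.TTheory GRing.Theory Num.Theory.
Local Open Scope ring_scope.

Section H.
Variables (R : realType) (s : nat).
Local Notation C := (R[i]).
Local Notation Pi := {mpoly C[s]}.


Lemma diff_coord (x y : 'rV[C]_s) : x != y -> exists k, x 0 k != y 0 k.
Proof.
move=> nxy; apply/existsP; apply: contraNT nxy; rewrite negb_exists => /forallP H.
apply/eqP/matrixP => i j; rewrite (ord1 i); exact/eqP/negPn/H.
Qed.

Lemma lin_msize k (c : C) : (msize ('X_k - c%:MP : Pi) <= 2)%N.
Proof.
apply: leq_trans (msizeD_le _ _) _.
by rewrite msizeN msizeX mdeg1 msizeC geq_max /=; case: (c != 0).
Qed.

Lemma vanish (x : 'rV[C]_s) (X : seq 'rV[C]_s) : exists w : Pi,
  [/\ (msize w <= (size X).+1)%N, evalpt w x != 0 &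
      forall y, y \in X -> y != x -> evalpt w y = 0].
Proof.
elim: X => [|y Y [w [hs hx hy]]].
  by exists 1; split => //; rewrite ?msize1 // /evalpt meval1 oner_neq0.
have [eyx|nyx] := eqVneq y x.
  exists w; split => //; first by rewrite ltnW.
  move=> z; rewrite inE => /orP[/eqP->|zY]; first by rewrite eyx eqxx.
  exact: hy.
have [k hk] := @diff_coord _ _ nyx.
exists (('X_k - (y 0 k)%:MP) * w); split.
- have wn0 : w != 0 by apply: contraNneq hx => ->; rewrite /evalpt meval0.
  have ln0 : ('X_k - (y 0 k)%:MP : Pi) != 0.
    apply: contraNneq hk => h0.
    have := congr1 (fun p => evalpt p x) h0.
    by rewrite /evalpt mevalB mevalXU mevalC meval0 => /eqP; rewrite subr_eq0 eq_sym => ->.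
  rewrite msizeM //=; have := lin_msize k (y 0 k).
  move: hs; case: (msize w) => [|m]; case: (msize _) => [|[|[|l]]] //= ; lia.
- by rewrite /evalpt mevalM mevalB mevalXU mevalC mulf_neq0 // subr_eq0 eq_sym.
- move=> z; rewrite inE => /orP[/eqP-> _|zY zx].
    by rewrite /evalpt mevalM mevalB mevalXU mevalC subrr mul0r.
  by rewrite /evalpt mevalM -/(evalpt w z) hy // mulr0.
Qed.

Lemma interp (X : seq 'rV[C]_s) (q : Pi) : exists r : Pi,
  (msize r <= size X)%N /\ forall x, x \in X -> evalpt r x = evalpt q x.
Proof.
elim: X => [|x Y [r [hs hr]]]; first by exists 0; rewrite msize0.
have [w [ws wx wy]] := vanish x Y.
pose c := (evalpt q x - evalpt r x) / evalpt w x.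
exists (r + c *: w); split.
- apply: leq_trans (msizeD_le _ _) _; rewrite geq_max /= (leq_trans hs) //.
  exact: leq_trans (msizeZ_le _ _) ws.
- move=> z; rewrite inE.
  have ev : evalpt (r + c *: w) z = evalpt r z + c * evalpt w z.
    by rewrite /evalpt mevalD mevalZ.
  rewrite ev; case/orP => [/eqP->|zY].
    by rewrite /c divfK // addrC subrK.
  have [ezx|nzx] := eqVneq z x; last by rewrite wy // mulr0 addr0 hr.
  by rewrite ezx /c divfK // -ezx hr // subrr addr0.
Qed.
End H.

Theorem lemma14 (R : realType) (s N : nat) (P : {mpoly R[i][s]} -> Prop) :
  nonredundant_druis N.+1 P ->
  forall p : {mpoly R[i][s]}, P p -> (msize p <= N.+1)%N.
Proof.
move=> [[[P0 Plin] Pint] nored] p Pp.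
apply/negPn/negP => hp; apply: nored.
pose Q := fun p : {mpoly R[i][s]} => P p /\ (msize p <= N.+1)%N.
have lQ : lin_subspace Q.
  split; first by split => //; rewrite msize0.
  move=> a u v [Pu hu] [Pv hv]; split; first exact: Plin.
  apply: leq_trans (msizeD_le _ _) _; rewrite geq_max hv andbT.
  exact: leq_trans (msizeZ_le _ _) hu.
exists Q; split => //.
- by move=> u [].
- by exists p; split => // -[_ h]; rewrite h in hp.
- split => // X q hX.
  have [hq|hq] := leqP (msize q) N.+1.
    have [u [Pu uX us]] := Pint X q hX.
    by exists u; split => //; split => //; apply: leq_trans us hq.
  have [r [rs rX]] := @interp R s X q.
  have [u [Pu uX us]] := Pint X r hX.
  have rN : (msize r <= N.+1)%N := leq_trans rs hX.
  exists u; split.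
  + by split => //; apply: leq_trans us rN.
  + by move=> x xX; rewrite uX // rX.
  + by apply: leq_trans us (leq_trans rN (ltnW hq)).
Qed.
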